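(* Let $R\subset S$ be an integral ring extension that has FIP. Then $R\subset S$ is seminormal if and only if the conductor $(R:S)$ is a semiprime (i.e. radical) ideal of $S$.
   Context: Rings are commutative with identity. $(R:S)=\{r\in R\mid rS\subseteq R\}$. The extension has FIP if the set $[R,S]$ of $R$-subalgebras of $S$ is finite. $R\subseteq S$ is seminormal if for $b\in S$, $b^2,b^3\in R$ implies $b\in R$. *)

(* Defs.v *)
From HB Require Import structures.
From mathcomp Require Import all_boot all_order all_algebra.
Set Implicit Arguments. Unset Strict Implicit. Unset Printing Implicit Defensive.
Import Order.TTheory GRing.Theory Num.Theory.
Local Open Scope ring_scope.

(* A ring extension R ⊆ S is modelled by a commutative ring S together with a
   subring R of S, given as a boolean predicate closed under the ring
   operations (1, subtraction, multiplication). *)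

Section Defs.
Variable S : comNzRingType.

Definition integral_over (R : {pred S}) (s : S) : Prop :=
  exists p : {poly S}, [/\ p \is monic, p \is a polyOver R & root p s].

Definition integral_ext (R : {pred S}) : Prop :=
  forall s : S, integral_over R s.

Definition intermediate_ring (R T : {pred S}) : Prop :=
  subring_closed T /\ {subset R <= T}.

(* FIP: the set [R,S] of R-subalgebras of S is finite *)
Definition FIP (R : {pred S}) : Prop :=
  exists (n : nat) (f : nat -> {pred S}),
    forall T : {pred S}, intermediate_ring R T ->
      exists2 i, (i < n)%N & T =i f i.

Definition seminormal (R : {pred S}) : Prop :=
  forall b : S, b ^+ 2 \in R -> b ^+ 3 \in R -> b \in R.

(* the conductor (R:S) = {r ∈ R | r S ⊆ R} (note r = r*1 ∈ R automatically) *)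
Definition conductor (R : {pred S}) (x : S) : Prop :=
  x \in R /\ forall s : S, x * s \in R.

Definition is_ideal (I : S -> Prop) : Prop :=
  [/\ I 0, (forall x y, I x -> I y -> I (x + y)) & (forall s x, I x -> I (s * x))].

Definition semiprime_ideal (I : S -> Prop) : Prop :=
  is_ideal I /\ forall (x : S) (n : nat), I (x ^+ n.+1) -> I x.

End Defs.

(* Main.v *)
Require Import Defs.
From HB Require Import structures.
From mathcomp Require Import all_boot all_order all_algebra.
From mathcomp Require Import ring zify.
From mathcomp Require Import perm.
From Stdlib Require Import Classical ClassicalEpsilon.
Import GRing.Theory.
Local Open Scope ring_scope.
Set Implicit Arguments.

Lemma sr1 (S : comNzRingType) (R : {pred S}) : subring_closed R -> 1 \in R.
Proof. by case. Qed.
Lemma srB (S : comNzRingType) (R : {pred S}) : subring_closed R ->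
  forall x y, x \in R -> y \in R -> x - y \in R.
Proof. by case=> _ h _ x y; apply: h. Qed.
Lemma srM (S : comNzRingType) (R : {pred S}) : subring_closed R ->
  forall x y, x \in R -> y \in R -> x * y \in R.
Proof. by case=> _ _ h x y; apply: h. Qed.
Lemma sr0 (S : comNzRingType) (R : {pred S}) : subring_closed R -> 0 \in R.
Proof. move=> h; rewrite -(subrr 1); apply: srB => //; exact: sr1. Qed.
Lemma srN (S : comNzRingType) (R : {pred S}) : subring_closed R ->
  forall x, x \in R -> - x \in R.
Proof. move=> h x hx; rewrite -sub0r; apply: srB => //; exact: sr0. Qed.
Lemma srD (S : comNzRingType) (R : {pred S}) : subring_closed R ->
  forall x y, x \in R -> y \in R -> x + y \in R.
Proof. move=> h x y hx hy; rewrite -(opprK y); apply: srB => //; exact: srN. Qed.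
Lemma srX (S : comNzRingType) (R : {pred S}) : subring_closed R ->
  forall x n, x \in R -> x ^+ n \in R.
Proof. move=> h x n hx; elim: n => [|n IH]; first exact: sr1.
by rewrite exprS; apply: srM. Qed.
Lemma srsum (S : comNzRingType) (R : {pred S}) : subring_closed R ->
  forall (I : Type) (r : seq I) (P : pred I) (F : I -> S),
  (forall i, P i -> F i \in R) -> \sum_(i <- r | P i) F i \in R.
Proof. move=> h I r P F hF; apply: (big_ind (fun x => x \in R)) => //.
exact: sr0. exact: srD. Qed.
Lemma srprod (S : comNzRingType) (R : {pred S}) : subring_closed R ->
  forall (I : Type) (r : seq I) (P : pred I) (F : I -> S),
  (forall i, P i -> F i \in R) -> \prod_(i <- r | P i) F i \in R.
Proof. move=> h I r P F hF; apply: (big_ind (fun x => x \in R)) => //.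
exact: sr1. exact: srM. Qed.

Lemma dir1 (S : comNzRingType) (R : {pred S}) :
  subring_closed R -> seminormal R -> semiprime_ideal (conductor R).
Proof.
move=> hR hsn; split.
  split.
  - split; first exact: sr0 hR. by move=> s; rewrite mul0r; exact: sr0.
  - move=> x y [hx1 hx2] [hy1 hy2]; split; first exact: srD.
    by move=> s; rewrite mulrDl; apply: srD.
  - move=> s x [hx1 hx2]; split; first by rewrite mulrC.
    by move=> t; rewrite (mulrC s) -mulrA.
have step : forall (x : S) k, conductor R (x ^+ k.+2) -> conductor R (x ^+ k.+1).
  move=> x k [h1 h2].
  have ht : forall t, x ^+ k.+1 * t \in R.
    move=> t; apply: hsn.
    - have -> : (x ^+ k.+1 * t) ^+ 2 = x ^+ k.+2 * (x ^+ k * t ^+ 2).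
        by rewrite !exprS expr0; ring.
      exact: h2.
    - have -> : (x ^+ k.+1 * t) ^+ 3 = x ^+ k.+2 * (x ^+ (2 * k).+1 * t ^+ 3).
        rewrite exprMn -exprM mulrA -exprD; congr (x ^+ _ * _).
        rewrite mulnC; lia.
      exact: h2.
  by split => //; rewrite -(mulr1 (x ^+ k.+1)).
move=> x n; elim: n => [|n IH]; first by rewrite expr1.
by move=> h; apply: IH; apply: step.
Qed.

Fixpoint inspan {S : comNzRingType} (R : {pred S}) (W : seq S) (x : S) : Prop :=
  match W with
  | [::] => x = 0
  | w :: W' => exists2 c, c \in R & inspan R W' (x - c * w)
  end.

Lemma span0 (S : comNzRingType) (R : {pred S}) : subring_closed R ->
  forall W, inspan R W 0.
Proof. move=> hR; elim=> [|w W IH] //=; exists 0; first exact: sr0.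
by rewrite mul0r subr0. Qed.

Lemma spanD (S : comNzRingType) (R : {pred S}) : subring_closed R ->
  forall W x y, inspan R W x -> inspan R W y -> inspan R W (x + y).
Proof. move=> hR; elim=> [|w W IH] x y /=; first by move=> -> ->; rewrite addr0.
move=> [c hc hx] [d hd hy]; exists (c + d); first exact: srD.
have -> : x + y - (c + d) * w = (x - c * w) + (y - d * w) by ring.
exact: IH. Qed.

Lemma spanM (S : comNzRingType) (R : {pred S}) : subring_closed R ->
  forall W r x, r \in R -> inspan R W x -> inspan R W (r * x).
Proof. move=> hR; elim=> [|w W IH] r x hr /=; first by move=> ->; rewrite mulr0.
move=> [c hc hx]; exists (r * c); first exact: srM.
have -> : r * x - r * c * w = r * (x - c * w) by ring.
exact: IH. Qed.

Lemma spanN (S : comNzRingType) (R : {pred S}) : subring_closed R ->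
  forall W x, inspan R W x -> inspan R W (- x).
Proof. move=> hR W x h; rewrite -mulN1r; apply: spanM => //.
apply: srN => //; exact: sr1. Qed.

Lemma span_sum (S : comNzRingType) (R : {pred S}) : subring_closed R ->
  forall W (I : Type) (r : seq I) (P : pred I) (F : I -> S),
  (forall i, P i -> inspan R W (F i)) -> inspan R W (\sum_(i <- r | P i) F i).
Proof. move=> hR W I r P F hF; apply: (big_ind (inspan R W)) => //.
exact: span0. exact: spanD. Qed.

Lemma span_mem (S : comNzRingType) (R : {pred S}) : subring_closed R ->
  forall W w, w \in W -> inspan R W w.
Proof. move=> hR; elim=> [|v W IH] w //=; rewrite in_cons => /orP [/eqP ->|hw].
  exists 1; first exact: sr1. by rewrite mul1r subrr; exact: span0.
exists 0; first exact: sr0. by rewrite mul0r subr0; apply: IH. Qed.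

Lemma span_trans (S : comNzRingType) (R : {pred S}) : subring_closed R ->
  forall W V x, inspan R W x -> (forall w, w \in W -> inspan R V w) -> inspan R V x.
Proof. move=> hR; elim=> [|w W IH] V x /=; first by move=> -> _; exact: span0.
move=> [c hc hx] hW.
have -> : x = (x - c * w) + c * w by ring.
apply: spanD => //.
  apply: IH => // v hv; apply: hW; by rewrite in_cons hv orbT.
apply: spanM => //; apply: hW; exact: mem_head. Qed.

Lemma span_mulr (S : comNzRingType) (R : {pred S}) : subring_closed R ->
  forall V w y, inspan R V y -> inspan R [seq w * v | v <- V] (w * y).
Proof. move=> hR; elim=> [|v V IH] w y /=; first by move=> ->; rewrite mulr0.
move=> [c hc hy]; exists c => //.
have -> : w * y - c * (w * v) = w * (y - c * v) by ring.
exact: IH. Qed.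

Lemma span_prod (S : comNzRingType) (R : {pred S}) : subring_closed R ->
  forall W V x y, inspan R W x -> inspan R V y ->
  inspan R [seq w * v | w <- W, v <- V] (x * y).
Proof. move=> hR W V x y hx hy.
apply: (span_trans hR [seq x * v | v <- V]).
  exact: span_mulr.
move=> z /mapP [v hv ->]; rewrite mulrC.
apply: (span_trans hR [seq v * w | w <- W]).
  exact: span_mulr.
move=> u /mapP [w hw ->]; apply: span_mem => //; rewrite mulrC.
by apply/allpairsP; exists (w, v).
Qed.

Definition spring {S : comNzRingType} (R : {pred S}) (W : seq S) :=
  inspan R W 1 /\ forall w1 w2, w1 \in W -> w2 \in W -> inspan R W (w1 * w2).

Lemma spring_mul (S : comNzRingType) (R : {pred S}) : subring_closed R ->
  forall W x y, spring R W -> inspan R W x -> inspan R W y -> inspan R W (x * y).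
Proof. move=> hR W x y [_ hW] hx hy.
apply: (span_trans hR [seq w * v | w <- W, v <- W]); first exact: span_prod.
by move=> z /allpairsP [[w v] [hw hv ->]]; apply: hW. Qed.

Lemma coef_in (S : comNzRingType) (R : {pred S}) : subring_closed R ->
  forall p : {poly S}, p \is a polyOver R -> forall i, p`_i \in R.
Proof. move=> hR p hp i.
have /allP h : all (mem R) p by exact: hp.
case: (ltnP i (size p)) => hi; first by apply: h; exact: mem_nth.
rewrite nth_default //; exact: sr0. Qed.

Lemma pow_span (S : comNzRingType) (R : {pred S}) : subring_closed R ->
  forall (p : {poly S}) s, p \is monic -> p \is a polyOver R -> root p s ->
  forall m, inspan R [seq s ^+ k | k <- iota 0 (size p).-1] (s ^+ m).
Proof.
move=> hR p s hm hp hr.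
set d := (size p).-1.
have hsz : size p = d.+1.
  rewrite /d prednK // lt0n size_poly_eq0; exact: monic_neq0.
have hsd : s ^+ d = - \sum_(i < d) p`_i * s ^+ i.
  move/rootP: hr; rewrite horner_coef hsz big_ord_recr /=.
  have -> : p`_d = 1 by move/monicP: hm; rewrite lead_coefE hsz.
  by rewrite mul1r => /eqP; rewrite addrC addr_eq0 => /eqP.
elim/ltn_ind => m IH.
case: (ltnP m d) => hmd.
  by apply: span_mem => //; apply: map_f; rewrite mem_iota.
have -> : s ^+ m = - \sum_(i < d) p`_i * s ^+ (m - d + i).
  rewrite -(subnK hmd) exprD hsd mulrN big_distrr /= addnK; congr (- _).
  by apply: eq_bigr => i _; rewrite exprD; ring.
apply: spanN => //; apply: span_sum => // i _; apply: spanM => //.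
  exact: coef_in.
apply: IH; have := ltn_ord i; lia.
Qed.

Lemma spring_ext (S : comNzRingType) (R : {pred S}) : subring_closed R ->
  forall W (p : {poly S}) s, spring R W -> p \is monic -> p \is a polyOver R -> root p s ->
  let W' := [seq w * v | w <- W, v <- [seq s ^+ k | k <- iota 0 (size p).-1]] in
  [/\ spring R W', inspan R W' s & forall x, inspan R W x -> inspan R W' x].
Proof.
move=> hR W p s [h1 hW] hm hp hr W'.
have hV := @pow_span _ _ hR p s hm hp hr.
split.
- split; first by rewrite -(mulr1 1); apply: (span_prod hR) => //; rewrite -(expr0 s).
  move=> z1 z2 /allpairsP [[w1 v1] [hw1 /mapP [i _ ->] ->]].
  move=> /allpairsP [[w2 v2] [hw2 /mapP [j _ ->] ->]] /=.
  have -> : w1 * s ^+ i * (w2 * s ^+ j) = (w1 * w2) * s ^+ (i + j) by rewrite exprD; ring.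
  by apply: (span_prod hR); [apply: hW | apply: hV].
- by rewrite -(mul1r s) -(expr1 s); apply: (span_prod hR).
- by move=> x hx; rewrite -(mulr1 x) -(expr0 s); apply: (span_prod hR).
Qed.

Definition asb (P : Prop) : bool := if excluded_middle_informative P then true else false.
Lemma asbP (P : Prop) : reflect P (asb P).
Proof. rewrite /asb; case: excluded_middle_informative => h; constructor => //. Qed.

Definition spanp {S : comNzRingType} (R : {pred S}) (W : seq S) : {pred S} :=
  fun x => asb (inspan R W x).

Lemma spanp_int (S : comNzRingType) (R : {pred S}) : subring_closed R ->
  forall W, spring R W -> intermediate_ring R (spanp R W).
Proof.
move=> hR W hW; have [h1 _] := hW; split; last first.
  move=> r hr; apply/asbP; rewrite -(mulr1 r); exact: spanM.
split.
- exact/asbP.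
- move=> x y /asbP hx /asbP hy; apply/asbP; apply: spanD => //; exact: spanN.
- move=> x y /asbP hx /asbP hy; apply/asbP; exact: spring_mul.
Qed.

Lemma fip_pigeon (S : comNzRingType) (R : {pred S}) : FIP R ->
  forall P : nat -> {pred S}, (forall m, intermediate_ring R (P m)) ->
  exists i j, (i < j)%N /\ P i =i P j.
Proof.
move=> [n [f hf]] P hP.
pose g m := epsilon (inhabits 0%N) (fun i => (i < n)%N /\ P m =i f i).
have hg : forall m, (g m < n)%N /\ P m =i f (g m).
  move=> m; apply: (@epsilon_spec nat (inhabits 0%N) (fun i => (i < n)%N /\ P m =i f i)); have [i hi e] := hf _ (hP m); by exists i.
have : ~~ uniq (map g (iota 0 n.+1)).
  apply/negP => hu.
  have hsub : {subset map g (iota 0 n.+1) <= iota 0 n}.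
    move=> z /mapP [m _ ->]; rewrite mem_iota add0n; exact: (hg m).1.
  by have := uniq_leq_size hu hsub; rewrite size_map !size_iota ltnn.
move/(uniqPn 0%N) => [i [j [hij hj]]].
rewrite size_map size_iota in hj.
rewrite !(nth_map 0%N) ?size_iota ?nth_iota //; last exact: ltn_trans hj.
rewrite !add0n => e.
exists i, j; split => // x; rewrite (hg i).2 (hg j).2 e //.
exact: ltn_trans hij hj.
Qed.

Lemma fin_span (S : comNzRingType) (R : {pred S}) : subring_closed R ->
  integral_ext R -> FIP R -> exists W, spring R W /\ forall s, inspan R W s.
Proof.
move=> hR hint hfip.
apply: NNPP => H.
have hout : forall W, spring R W -> exists s, ~ inspan R W s.
  move=> W hW; apply: NNPP => H2; apply: H; exists W; split => // s.
  by apply: NNPP => H3; apply: H2; exists s.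
pose pol (s : S) := epsilon (inhabits (0 : {poly S}))
   (fun p => [/\ p \is monic, p \is a polyOver R & root p s]).
have hpol : forall s, [/\ pol s \is monic, pol s \is a polyOver R & root (pol s) s].
  move=> s; apply: (@epsilon_spec {poly S} (inhabits 0)
   (fun p => [/\ p \is monic, p \is a polyOver R & root p s])); exact: hint.
pose out (W : seq S) := epsilon (inhabits (0 : S)) (fun s => ~ inspan R W s).
pose next (W : seq S) := let s := out W in
  [seq w * v | w <- W, v <- [seq s ^+ k | k <- iota 0 (size (pol s)).-1]].
pose Ws m := iter m next [:: 1].
have hWs : forall m, spring R (Ws m) /\ inspan R (Ws m.+1) (out (Ws m))
     /\ forall x, inspan R (Ws m) x -> inspan R (Ws m.+1) x.
  elim=> [|m [IH1 _]].
    have h1 : spring R [:: 1].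
      split; first by apply: span_mem => //; exact: mem_head.
      by move=> w1 w2; rewrite !inE => /eqP -> /eqP ->; rewrite mulr1; apply: span_mem => //; exact: mem_head.
    have [hm hp hr] := hpol (out [:: 1]).
    have [a b c] := @spring_ext _ _ hR _ _ _ h1 hm hp hr.
    split; first exact: h1. split; [exact: b | exact: c].
  have hsp : spring R (Ws m.+1).
    have [hm hp hr] := hpol (out (Ws m)).
    by have [? ? ?] := @spring_ext _ _ hR _ _ _ IH1 hm hp hr.
  have [hm hp hr] := hpol (out (Ws m.+1)).
  have [a b c] := @spring_ext _ _ hR _ _ _ hsp hm hp hr.
  split; first exact: hsp. split; [exact: b | exact: c].
have hmono : forall i k x, inspan R (Ws i) x -> inspan R (Ws (i + k)%N) x.
  move=> i; elim=> [|k IH] x hx; first by rewrite addn0.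
  rewrite addnS; apply: ((hWs (i + k)%N).2.2); exact: IH.
have hnot : forall m, ~ inspan R (Ws m) (out (Ws m)).
  move=> m; apply: (@epsilon_spec S (inhabits 0) (fun s => ~ inspan R (Ws m) s)).
  apply: hout; exact: (hWs m).1.
have [i [j [hij e]]] := @fip_pigeon _ _ hfip (fun m => spanp R (Ws m))
   (fun m => spanp_int hR (hWs m).1).
apply: (hnot i).
have : spanp R (Ws j) (out (Ws i)).
  apply/asbP; rewrite -(subnKC hij); apply: hmono; exact: (hWs i).2.1.
by rewrite -[spanp _ _ _]/(out (Ws i) \in spanp R (Ws j)) -e => /asbP.
Qed.

Lemma inspan_coef (S : comNzRingType) (R : {pred S}) : subring_closed R ->
  forall W x, inspan R W x ->
  exists cs : seq S, (forall i, cs`_i \in R) /\ x = \sum_(i < size W) cs`_i * W`_i.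
Proof.
move=> hR; elim=> [|w W IH] x /=.
  move=> ->; exists [::]; split; last by rewrite big_ord0.
  move=> i; rewrite nth_nil; exact: sr0.
move=> [c hc /IH [cs [hcs e]]]; exists (c :: cs); split.
  by case=> [|i] //=.
rewrite big_ord_recl /=.
have -> : x = c * w + (x - c * w) by ring.
rewrite e; congr (_ + _); apply: eq_bigr => i _; by rewrite lift0.
Qed.

Lemma det_in (S : comNzRingType) (R : {pred S}) : subring_closed R ->
  forall k (M : 'M[S]_k), (forall i j, M i j \in R) -> \det M \in R.
Proof.
move=> hR k M hM.
have -> : \det M = \sum_(s : 'S_k) (-1) ^+ s * \prod_i M i (s i) by [].
apply: srsum => // s _.
have h1 : (-1) ^+ perm.odd_perm s \in R by apply: (srX hR); apply: (srN hR); exact: sr1.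
have h2 : \prod_i M i (s i) \in R by apply: (srprod hR).
have h3 := srM hR _ _ h1 h2. exact h3.

Qed.

Definition cong {S : comNzRingType} (R : {pred S}) (a x y : S) : Prop :=
  [/\ x \in R, y \in R & exists2 r, r \in R & x - y = a * r].

Lemma cong_det (S : comNzRingType) (R : {pred S}) : subring_closed R ->
  forall a k (A B : 'M[S]_k), (forall i j, cong R a (A i j) (B i j)) ->
  cong R a (\det A) (\det B).
Proof.
move=> hR a k A B hAB.
have cD : forall x1 x2 y1 y2, cong R a x1 x2 -> cong R a y1 y2 -> cong R a (x1 + y1) (x2 + y2).
  move=> x1 x2 y1 y2 [h1 h2 [r hr e]] [h3 h4 [r' hr' e']]; split; [exact: (srD hR) | exact: (srD hR) |].
  exists (r + r'); first exact: (srD hR).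
  have -> : x1 + y1 - (x2 + y2) = (x1 - x2) + (y1 - y2) by ring.
  by rewrite e e'; ring.
have cM : forall x1 x2 y1 y2, cong R a x1 x2 -> cong R a y1 y2 -> cong R a (x1 * y1) (x2 * y2).
  move=> x1 x2 y1 y2 [h1 h2 [r hr e]] [h3 h4 [r' hr' e']]; split; [exact: (srM hR) | exact: (srM hR) |].
  exists (r * y1 + x2 * r'); first by apply: (srD hR); apply: (srM hR).
  have -> : x1 * y1 - x2 * y2 = (x1 - x2) * y1 + x2 * (y1 - y2) by ring.
  by rewrite e e'; ring.
have cR : forall x, x \in R -> cong R a x x.
  move=> x hx; split => //; exists 0; first exact: sr0. by rewrite subrr mulr0.
have -> : \det A = \sum_(s : 'S_k) (-1) ^+ s * \prod_i A i (s i) by [].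
have -> : \det B = \sum_(s : 'S_k) (-1) ^+ s * \prod_i B i (s i) by [].
apply: (big_ind2 (cong R a)); first exact: cR (sr0 hR).
  exact: cD.
move=> s _; apply: (cM).
  apply: cR; apply: (srX hR); apply: (srN hR); exact: sr1.
apply: (big_ind2 (cong R a)); first exact: cR (sr1 hR).
  exact: cM.
by move=> i _.
Qed.

Lemma nak (S : comNzRingType) (R : {pred S}) : subring_closed R ->
  forall W a n, (forall s, inspan R W s) -> a \in R ->
  (forall s, exists2 r, r \in R & exists s', a ^+ n * s = r + a ^+ n.+1 * s') ->
  exists2 r, r \in R & conductor R (a ^+ n * (1 + a * r)).
Proof.
move=> hR W a n hW ha hst.
pose k := size W.
have hj : forall j : 'I_k, exists p : S * seq S, [/\ p.1 \in R, forall l, p.2`_l \in R &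
    a ^+ n * W`_j = p.1 + a ^+ n.+1 * \sum_(l < k) p.2`_l * W`_l].
  move=> j; have [r hr [s' e]] := hst (W`_j).
  have [cs [hcs es]] := @inspan_coef _ _ hR _ _ (hW s'); exists (r, cs); split => //.
  by rewrite e es.
have [F hF] := fin_all_exists hj.
pose C : 'M[S]_k := \matrix_(j, l) (F j).2`_l.
pose A : 'M[S]_k := 1%:M - a *: C.
pose v : 'cV[S]_k := \col_j (a ^+ n * W`_j).
pose rho : 'cV[S]_k := \col_j (F j).1.
have hAv : A *m v = rho.
  apply/matrixP => j l; rewrite ord1 /A mulmxBl mul1mx -scalemxAl !mxE.
  have [_ _ e] := hF j; rewrite e.
  have -> : a * \sum_j0 C j j0 * v j0 0 = a ^+ n.+1 * \sum_(l < k) (F j).2`_l * W`_l.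
    rewrite !mulr_sumr; apply: eq_bigr => l0 _; rewrite !mxE exprS; ring.
  by rewrite addrK.
have hdet : \det A *: v = \adj A *m rho.
  by rewrite -hAv mulmxA mul_adj_mx mul_scalar_mx.
have hA : forall i j, A i j \in R.
  move=> i j; rewrite !mxE; apply: (srB hR).
    by case: (i == j); [exact: sr1 | exact: sr0].
  by apply: (srM hR) => //; have [_ h _] := hF i; apply: h.
have hadj : forall i j, \adj A i j \in R.
  move=> i j; rewrite mxE /cofactor; apply: (srM hR).
    apply: (srX hR); apply: (srN hR); exact: sr1.
  apply: (det_in hR) => i0 j0; rewrite mxE [X in X \in R]mxE; exact: hA.
have hcong : cong R a (\det A) (\det (1%:M : 'M[S]_k)).
  apply: (cong_det hR) => i j; split => //.
    by rewrite mxE; case: (i == j); [exact: sr1 | exact: sr0].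
  exists (- (F i).2`_j); first by apply: (srN hR); have [_ h _] := hF i; apply: h.
  rewrite /A !mxE; ring.
rewrite det1 in hcong; have [hdA _ [r hr er]] := hcong.
exists r => //.
have ed : 1 + a * r = \det A by rewrite -er; ring.
have key : forall j : 'I_k, \det A * (a ^+ n * W`_j) \in R.
  move=> j; have := congr1 (fun M : 'cV[S]_k => M j ord0) hdet; rewrite !mxE => ->.
  apply: (srsum hR) => l _; apply: (srM hR); first exact: hadj.
  by rewrite mxE; have [h _ _] := hF l.
have hall : forall s, a ^+ n * (1 + a * r) * s \in R.
  move=> s; have [cs [hcs ->]] := @inspan_coef _ _ hR _ _ (hW s).
  rewrite ed mulr_sumr; apply: (srsum hR) => l _.
  have -> : a ^+ n * \det A * (cs`_l * W`_l) = cs`_l * (\det A * (a ^+ n * W`_l)) by ring.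
  by apply: (srM hR).
split => //; rewrite -(mulr1 (_ * _)); exact: hall.
Qed.

Definition Tp {S : comNzRingType} (R : {pred S}) (a : S) (m : nat) : {pred S} :=
  fun x => asb (exists2 r, r \in R & exists s', x = r + a ^+ m * s').

Lemma Tp_int (S : comNzRingType) (R : {pred S}) : subring_closed R ->
  forall a m, intermediate_ring R (Tp R a m).
Proof.
move=> hR a m; split; last first.
  move=> r hr; apply/asbP; exists r => //; exists 0; by rewrite mulr0 addr0.
split.
- apply/asbP; exists 1; first exact: sr1. by exists 0; rewrite mulr0 addr0.
- move=> x y /asbP [r hr [s ->]] /asbP [r' hr' [s' ->]]; apply/asbP.
  exists (r - r'); first exact: (srB hR).
  by exists (s - s'); ring.
- move=> x y /asbP [r hr [s ->]] /asbP [r' hr' [s' ->]]; apply/asbP.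
  exists (r * r'); first exact: (srM hR).
  by exists (r * s' + s * r' + a ^+ m * s * s'); ring.
Qed.

Lemma dir2 (S : comNzRingType) (R : {pred S}) :
  subring_closed R -> integral_ext R -> FIP R ->
  semiprime_ideal (conductor R) -> seminormal R.
Proof.
move=> hR hint hfip [[hC0 hCD hCM] hrad] b hb2 hb3.
pose a := b ^+ 2.
have [W [_ hW]] := fin_span hR hint hfip.
have [i [j [hij e]]] := @fip_pigeon _ _ hfip (Tp R a) (Tp_int hR a).
have hst : forall s, exists2 r, r \in R & exists s', a ^+ i * s = r + a ^+ i.+1 * s'.
  move=> s.
  have : a ^+ i * s \in Tp R a j.
    rewrite -e; apply/asbP; exists 0; first exact: sr0. by exists s; rewrite add0r.
  move=> /asbP [r hr [s' ->]]; exists r => //; exists (a ^+ (j - i.+1) * s').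
  by rewrite mulrA -exprD subnKC.
have [r hr hc] := @nak _ _ hR W a i hW hb2 hst.
pose u := 1 + a * r.
have hy : conductor R (a * u).
  apply: (hrad _ i).
  have -> : (a * u) ^+ i.+1 = (a * u ^+ i) * (a ^+ i * u) by rewrite exprMn !exprS; ring.
  exact: hCM.
have hbu : conductor R (b * u).
  apply: (hrad _ 1%N).
  have -> : (b * u) ^+ 2 = u * (a * u) by rewrite /a; ring.
  exact: hCM.
have -> : b = b * u - b ^+ 3 * r by rewrite /u /a; ring.
apply: (srB hR); first exact: hbu.1.
exact: (srM hR).
Qed.

Unset Implicit Arguments.

Theorem proposition3p2 (S : comNzRingType) (R : {pred S}) :
  subring_closed R -> integral_ext R -> FIP R ->
  (seminormal R <-> semiprime_ideal (conductor R)).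
Proof.
move=> hR hint hfip; split; first exact: dir1.
exact: dir2.
Qed.
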